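(* In the setting of the context, for every iteration $n$ (with $R_n\neq0$): (a) $M\subset H_n:=\bigcap_{k=1}^{N_n}H(v_{n,k},\beta_{n,k})$, where $H(v,\beta)=\{x\in X:\langle v,x\rangle=\beta\}$. (b) $J_p(x_n)-J_p(x_0)$ lies in the linear span of the search directions of all previous iterations, $\mathrm{span}\bigcup_{m<n}V_m$, and hence in $\overline{\mathcal{R}(A^* )}$. (c) $x_{n+1}=\Pi^{X}_{H_n}(x_n)$, the Bregman projection of $x_n$ onto $H_n$ in $X$, and $J_p(x_{n+1})=\Pi^{X^*}_{J_p(x_n)+V_n}(J_p(z))$ for every $z\in M$, where $\Pi^{X^*}$ is the Bregman projection in $X^*$. (d) $J_{p^*}(v_{n,N_n})=\Pi^{X}_{V_{n-1}^{\perp}}(J_{p^*}(u_n))$, where $V_{n-1}^\perp=\{x\in X:\langle v,x\rangle=0\ \forall v\in V_{n-1}\}$.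
   Context: $X$ is a real smooth, uniformly convex Banach space, $Y$ a real Banach space, $A:X\to Y$ bounded linear with adjoint $A^*$, $y\in\mathcal{R}(A)$, $M=\{x:Ax=y\}$. Fix $p,r\in(1,\infty)$, $p^*=p/(p-1)$. $J_p:X\to X^*$ is the duality mapping with gauge $t^{p-1}$, $J_{p^*}:X^*\to X$ that of $X^*$ with gauge $t^{p^*-1}$ (inverse of $J_p$), $J_r^Y$ a single-valued selection of the duality mapping of $Y$ with gauge $t^{r-1}$. Bregman distance in $X$: $D_p(x,z)=\tfrac1{p^*}\|x\|^p-\langle J_p(x),z\rangle+\tfrac1p\|z\|^p$; $\Pi^X_C(x)$ is the minimizer of $D_p(x,\cdot)$ over a closed convex nonempty $C\subset X$. In $X^*$ the Bregman distance is $D_{p^*}(x^*,z^* )=\tfrac1p\|x^*\|^{p^*}-\langle z^*,J_{p^*}(x^* )\rangle+\tfrac1{p^*}\|z^*\|^{p^*}$, and $\Pi^{X^*}_C(x^* )$ minimizes $D_{p^*}(x^*,\cdot)$ over closed convex $C\subset X^*$. Method: choose $x_0$ with $J_p(x_0)\in\overline{\mathcal{R}(A^* )}$, fix $N\in\mathbb{N}$, $N_n=\min(N,n+1)$, $V_{-1}=\{0\}$. For $n=0,1,\dots$: $w_n=Ax_n-y$, $R_n=\|w_n\|$; stop if $R_n=0$. Else $u_n^*=J_r^Y(w_n)$, $u_n=A^*u_n^*$. Let $s_n$ minimize $s\mapsto\|u_n-\sum_{i=1}^{N_{n-1}}s_iv_{n-1,i}\|^{p^*}$ (empty sum for $n=0$),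 set $v_{n,N_n}=u_n-\sum_k s_{n,k}v_{n-1,k}$ with precursor $w^*_{n,N_n}=u_n^*-\sum_k s_{n,k}w^*_{n-1,k}$; $v_{n,1},\dots,v_{n,N_n-1}$ with precursors are the last $N_n-1$ entries of the previous lists, in order ($v_{n,k}=A^*w^*_{n,k}$). $V_n=\mathrm{span}\{v_{n,1},\dots,v_{n,N_n}\}$, offsets $\beta_{n,k}=\langle w^*_{n,k},y\rangle$; $t_n$ minimizes $h_n(t)=\tfrac1{p^*}\|J_p(x_n)-\sum_k t_kv_{n,k}\|^{p^*}+\sum_k t_k\beta_{n,k}$; $x_{n+1}=J_{p^*}(J_p(x_n)-\sum_k t_{n,k}v_{n,k})$. *)

(* Defs.v *)
From HB Require Import structures.
From mathcomp Require Import all_boot all_order all_algebra.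
From mathcomp Require Import all_classical all_reals all_analysis.
Set Implicit Arguments. Unset Strict Implicit. Unset Printing Implicit Defensive.
Import Order.TTheory GRing.Theory Num.Theory.
Import numFieldNormedType.Exports.
Local Open Scope classical_set_scope.
Local Open Scope ring_scope.

Section Defs.
Context {R : realType}.

(* Elements of the dual space V^* are represented as functions V -> R
   that are linear and continuous. *)
Definition is_functional {V : normedModType R} (f : V -> R) : Prop :=
  (forall (a : R) (u w : V), f (a *: u + w) = a * f u + f w) /\ continuous f.

Definition bounded_linear {V W : normedModType R} (A : V -> W) : Prop :=
  (forall (a : R) (u w : V), A (a *: u + w) = a *: A u + A w) /\ continuous A.

Definition dnorm {V : normedModType R} (f : V -> R) : R :=
  sup [set `|f u| | u in [set u : V | `|u| <= 1]].

Definition uniformly_convex (V : normedModType R) : Prop :=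
  forall eps : R, 0 < eps -> eps <= 2 ->
  exists2 delta : R, 0 < delta &
    forall u w : V, `|u| <= 1 -> `|w| <= 1 -> eps <= `|u - w| ->
      `|2^-1 *: (u + w)| <= 1 - delta.

Definition smooth (V : normedModType R) : Prop :=
  forall u : V, `|u| = 1 -> forall f g : V -> R,
    is_functional f -> is_functional g -> dnorm f = 1 -> dnorm g = 1 ->
    f u = 1 -> g u = 1 -> f = g.

(* f is an element of the duality mapping (gauge t^(q-1)) of V at u *)
Definition is_duality {V : normedModType R} (q : R) (u : V) (f : V -> R) : Prop :=
  is_functional f /\ f u = `|u| `^ q /\ dnorm f = `|u| `^ (q - 1).

(* u (in V, identified with the bidual) is the value of the duality mapping of V^* (gauge t^(q-1)) at f *)
Definition is_dual_duality {V : normedModType R} (q : R) (f : V -> R) (u : V) : Prop :=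
  f u = dnorm f `^ q /\ `|u| = dnorm f `^ (q - 1).

Definition pconj (p : R) : R := p / (p - 1).

Definition Dp {V : normedModType R} (p : R) (J : V -> V -> R) (u z : V) : R :=
  (pconj p)^-1 * `|u| `^ p - J u z + p^-1 * `|z| `^ p.

Definition Dps {V : normedModType R} (p : R) (Jps : (V -> R) -> V)
  (us zs : V -> R) : R :=
  p^-1 * dnorm us `^ pconj p - zs (Jps us) + (pconj p)^-1 * dnorm zs `^ pconj p.

(* J_p(x0) lies in the norm closure of the range of A^* *)
Definition in_closure_range_adj {V W : normedModType R} (A : V -> W)
  (f : V -> R) : Prop :=
  forall eps : R, 0 < eps -> exists g : W -> R,
    is_functional g /\ dnorm (fun z => f z - g (A z)) < eps.

Definition lincomb {V : Type} (K : nat) (c : nat -> R) (v : nat -> V -> R) : V -> R :=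
  fun z => \sum_(k < K) c k * v k z.

End Defs.

(* N_n = min(N, n+1); Nprev N n = N_{n-1} = min(N, n) (so N_{-1} = 0). *)
Definition Nn (N n : nat) : nat := minn N n.+1.
Definition Nprev (N n : nat) : nat := minn N n.

(* Iteration m of the method (with R_m <> 0). Indices k are 0-based:
   v m k, k < Nn N m, is v_{m,k+1} of the paper, ws m k its precursor
   w^*_{m,k+1}; s m k = s_{m,k+1}, t m k = t_{m,k+1}. *)
Definition algo_step {R : realType} {X Y : normedModType R}
  (A : X -> Y) (y : Y) (p : R) (N : nat)
  (J : X -> X -> R) (Jps : (X -> R) -> X) (Jr : Y -> Y -> R)
  (x : nat -> X) (v : nat -> nat -> X -> R) (ws : nat -> nat -> Y -> R)
  (s t : nat -> nat -> R) (m : nat) : Prop :=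
  let w := A (x m) - y in
  let us := Jr w in
  let u := fun z => us (A z) in
  let vnew := fun z => u z - lincomb (Nprev N m) (s m) (v m.-1) z in
  let h := fun c : nat -> R =>
    (pconj p)^-1 * dnorm (fun z => J (x m) z - lincomb (Nn N m) c (v m) z) `^ pconj p
    + \sum_(k < Nn N m) c k * ws m k y in
  `|w| <> 0 /\
  (forall c : nat -> R,
     dnorm vnew `^ pconj p <=
     dnorm (fun z => u z - lincomb (Nprev N m) c (v m.-1) z) `^ pconj p) /\
  v m (Nn N m).-1 = vnew /\
  ws m (Nn N m).-1 = (fun z => us z - lincomb (Nprev N m) (s m) (ws m.-1) z) /\
  (forall k : nat, (k < (Nn N m).-1)%N ->
     v m k = v m.-1 (Nprev N m - (Nn N m).-1 + k)%N /\
     ws m k = ws m.-1 (Nprev N m - (Nn N m).-1 + k)%N) /\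
  (forall c : nat -> R, h (t m) <= h c) /\
  x m.+1 = Jps (fun z => J (x m) z - lincomb (Nn N m) (t m) (v m) z).

(* Main.v *)
Require Import Defs.
From HB Require Import structures.
From mathcomp Require Import all_boot all_order all_algebra.
From mathcomp Require Import all_classical all_reals all_analysis.
From mathcomp Require Import ring lra.
Import Order.TTheory GRing.Theory Num.Theory.
Import numFieldNormedType.Exports.
Local Open Scope classical_set_scope.
Local Open Scope ring_scope.
Set Implicit Arguments. Unset Strict Implicit. Unset Printing Implicit Defensive.


Section Func.
Context {R : realType} {V : normedModType R}.
Implicit Types (f g e : V -> R).

Definition lin f := forall (a : R) (u w : V), f (a *: u + w) = a * f u + f w.
Definition bnd f := exists C : R, forall u, `|f u| <= C * `|u|.

Lemma lin0 f : lin f -> f 0 = 0.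
Proof.
move=> hf; have := hf 1 0 0; rewrite scale1r addr0 mul1r => h.
by apply: (addrI (f 0)); rewrite addr0 -h.
Qed.

Lemma linZ f : lin f -> forall a u, f (a *: u) = a * f u.
Proof. by move=> hf a u; have := hf a u 0; rewrite addr0 lin0 // addr0. Qed.

Lemma linD f : lin f -> forall u w, f (u + w) = f u + f w.
Proof. by move=> hf u w; have := hf 1 u w; rewrite scale1r mul1r. Qed.

Lemma linN f : lin f -> forall u, f (- u) = - f u.
Proof. by move=> hf u; rewrite -scaleN1r linZ // mulN1r. Qed.

Lemma linB f : lin f -> forall u w, f (u - w) = f u - f w.
Proof. by move=> hf u w; rewrite linD // linN. Qed.

Lemma bnd_pos f : bnd f -> exists2 C : R, 0 < C & forall u, `|f u| <= C * `|u|.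
Proof.
case=> C hC; exists (`|C| + 1); first by rewrite ltr_wpDl.
move=> u; apply: (le_trans (hC u)); apply: ler_wpM2r => //.
by apply: le_trans (ler_norm _) _; rewrite lerDl.
Qed.

Lemma cont_bnd f : lin f -> continuous f -> bnd f.
Proof.
move=> hl hc; have := hc 0 => /cvgrPdist_lt /(_ 1 ltr01).
rewrite lin0 // => /nbhs_normP [d d0 hd].
exists (2 / d) => u; have [->|u0] := eqVneq u 0.
  by rewrite lin0 // !normr0 mulr0.
have nu : 0 < `|u| by rewrite normr_gt0.
have c0 : 0 < d / (2 * `|u|) by rewrite divr_gt0 // mulr_gt0.
pose z := (d / (2 * `|u|)) *: u.
have hz : `|f z| < 1.
  have := hd z; rewrite /= !sub0r !normrN. move=> H; apply: H.
  rewrite /ball_ /= /z normrZ (ger0_norm (ltW c0)).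
  rewrite invfM mulrA mulfVK ?gt_eqF //.
  by rewrite gtr_pMr // invf_lt1 // ltr1n.
move: hz; rewrite /z linZ // normrM (ger0_norm (ltW c0)) => h.
have h2 : `|f u| <= (d / (2 * `|u|))^-1.
  by rewrite -(ler_pM2l c0) mulfV ?gt_eqF // (ltW h).
by apply: (le_trans h2); rewrite le_eqVlt; apply/orP; left; apply/eqP; rewrite invfM invrK; ring.
Qed.

Lemma bnd_cont f : lin f -> bnd f -> continuous f.
Proof.
move=> hl /bnd_pos [C C0 hC] x.
apply/cvgrPdist_lt => e e0; near=> z.
rewrite -linB //; apply: (le_lt_trans (hC _)).
rewrite -ltr_pdivlMl //.
near: z; apply: cvgr_dist_lt => //; by rewrite mulr_gt0 ?invr_gt0.
Unshelve. all: by end_near. Qed.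

Lemma functionalP f : is_functional f <-> lin f /\ bnd f.
Proof.
split=> [[hl hc]|[hl hb]]; first by split => //; exact: cont_bnd.
by split => //; exact: bnd_cont.
Qed.

End Func.


Section DN.
Context {R : realType} {V : normedModType R}.
Implicit Types (f g e : V -> R).

Let S f := [set `|f u| | u in [set u : V | `|u| <= 1]].

Lemma S_ne f : S f !=set0.
Proof. by exists `|f 0|, 0 => //=; rewrite normr0. Qed.

Lemma dn_has_sup f : bnd f -> has_sup (S f).
Proof.
case=> C hC; split; first exact: S_ne.
exists `|C| => _ [u hu <-]; apply: (le_trans (hC u)).
apply: (@le_trans _ _ (`|C| * `|u|)); first by apply: ler_wpM2r => //; exact: ler_norm.
by rewrite -[leRHS]mulr1; apply: ler_wpM2l.
Qed.

Lemma dn_ge f u : bnd f -> `|u| <= 1 -> `|f u| <= dnorm f.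
Proof.
move=> hb hu; have [_ hub] := dn_has_sup hb.
by apply: (ub_le_sup hub); exists u.
Qed.

Lemma dn_le f B : (forall u, `|u| <= 1 -> `|f u| <= B) -> dnorm f <= B.
Proof. by move=> h; apply: ge_sup; [exact: S_ne|move=> _ [u hu <-]; exact: h]. Qed.

Lemma dn_ge0 f : bnd f -> 0 <= dnorm f.
Proof. by move=> hb; apply: le_trans (dn_ge (u := 0) hb _); rewrite ?normr0. Qed.

Lemma dn_bound f u : lin f -> bnd f -> `|f u| <= dnorm f * `|u|.
Proof.
move=> hl hb; have [->|u0] := eqVneq u 0; first by rewrite lin0 // !normr0 mulr0.
have nu : 0 < `|u| by rewrite normr_gt0.
have := @dn_ge f (`|u|^-1 *: u) hb.
rewrite normrZ normfV normr_id mulVf ?gt_eqF // lexx linZ // normrM normfV normr_id.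
by move=> /(_ isT); rewrite ler_pdivrMl // mulrC.
Qed.

Lemma dn_le2 f B : 0 <= B -> (forall u, `|f u| <= B * `|u|) -> dnorm f <= B.
Proof.
move=> B0 h; apply: dn_le => u hu; apply: (le_trans (h u)).
by rewrite -[leRHS]mulr1; apply: ler_wpM2l.
Qed.

Lemma dn_eq0 f : lin f -> bnd f -> dnorm f = 0 -> forall u, f u = 0.
Proof.
move=> hl hb h0 u; have := dn_bound u hl hb; rewrite h0 mul0r.
by rewrite normr_le0 => /eqP.
Qed.

Lemma bnd_scale f c : bnd f -> bnd (fun z => c * f z).
Proof. by case=> C hC; exists (`|c| * C) => u; rewrite normrM -mulrA ler_wpM2l. Qed.

Lemma lin_scale f c : lin f -> lin (fun z => c * f z).
Proof. by move=> hl a u w; rewrite hl; ring. Qed.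

Lemma dn_scale f c : lin f -> bnd f -> dnorm (fun z => c * f z) = `|c| * dnorm f.
Proof.
move=> hl hb; apply/eqP; rewrite eq_le; apply/andP; split.
  apply: dn_le2; first by rewrite mulr_ge0 ?dn_ge0.
  by move=> u; rewrite normrM -mulrA ler_wpM2l // dn_bound.
have [->|c0] := eqVneq c 0.
  by rewrite normr0 mul0r; apply: dn_ge0; apply: bnd_scale.
have nc : 0 < `|c| by rewrite normr_gt0.
have hD : 0 <= dnorm (fun z => c * f z) by apply: dn_ge0; apply: bnd_scale.
have h : dnorm f <= `|c|^-1 * dnorm (fun z => c * f z).
  apply: dn_le2; first by rewrite mulr_ge0 // invr_ge0 ltW.
  move=> u; have -> : f u = c^-1 * (c * f u) by rewrite mulrA mulVf // mul1r.
  rewrite normrM normfV -mulrA ler_pM2l ?invr_gt0 //.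
  by have := dn_bound u (lin_scale c hl) (bnd_scale c hb).
by move: h; rewrite -(ler_pM2l nc) mulrA mulfV ?gt_eqF // mul1r.
Qed.

Lemma func_lin f : is_functional f -> lin f.
Proof. by case. Qed.
Lemma func_bnd f : is_functional f -> bnd f.
Proof. by move/functionalP => []. Qed.

Lemma func_add f g : is_functional f -> is_functional g ->
  is_functional (fun z => f z + g z).
Proof.
move=> /functionalP [hf [C hC]] /functionalP [hg [D hD]]; apply/functionalP; split.
  by move=> a u w; rewrite hf hg; ring.
exists (C + D) => u; apply: (le_trans (ler_normD _ _)).
by rewrite mulrDl lerD.
Qed.

Lemma func_scale f c : is_functional f -> is_functional (fun z => c * f z).
Proof.
move=> /functionalP [hf hb]; apply/functionalP; split; [exact: lin_scale|exact: bnd_scale].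
Qed.

Lemma func_opp f : is_functional f -> is_functional (fun z => - f z).
Proof.
move=> hf; have -> : (fun z => - f z) = (fun z => -1 * f z).
  by apply: funext => z; rewrite mulN1r.
exact: func_scale.
Qed.

Lemma func_sub f g : is_functional f -> is_functional g ->
  is_functional (fun z => f z - g z).
Proof. by move=> hf hg; apply: func_add => //; apply: func_opp. Qed.

Lemma func0 : is_functional (fun _ : V => 0 : R).
Proof.
apply/functionalP; split; first by move=> a u w; ring.
by exists 0 => u; rewrite normr0 mul0r.
Qed.

Lemma func_sum K (F : nat -> V -> R) : (forall i, (i < K)%N -> is_functional (F i)) ->
  is_functional (fun z => \sum_(i < K) F i z).
Proof.
elim: K => [|K IH] hF.
  have -> : (fun z => \sum_(i < 0) F i z) = (fun _ => 0).
    by apply: funext => z; rewrite big_ord0.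
  exact: func0.
have -> : (fun z => \sum_(i < K.+1) F i z) = (fun z => \sum_(i < K) F i z + F K z).
  by apply: funext => z; rewrite big_ord_recr.
apply: func_add; last exact: hF.
by apply: IH => i hi; apply: hF; apply: ltnW.
Qed.

Lemma func_lincomb K c (w : nat -> V -> R) : (forall k, (k < K)%N -> is_functional (w k)) ->
  is_functional (lincomb K c w).
Proof.
move=> hw; rewrite /lincomb.
by apply: (func_sum (F := fun k z => c k * w k z)) => k hk; apply: func_scale; apply: hw.
Qed.

End DN.

Lemma func_comp {R : realType} {V W : normedModType R} (A : V -> W) (g : W -> R) :
  bounded_linear A -> is_functional g -> is_functional (fun z => g (A z)).
Proof.
move=> [hA hAc] [hg hgc]; split.
  by move=> a u w; rewrite hA hg.
move=> z; exact: (continuous_comp (hAc z) (hgc (A z))).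
Qed.


Section Pow.
Context {R : realType}.
Variable p : R.
Hypothesis hp : 1 < p.

Lemma p_gt0 : 0 < p. Proof. by apply: lt_trans hp. Qed.
Lemma p1_gt0 : 0 < p - 1. Proof. by rewrite subr_gt0. Qed.

Lemma pcE : pconj p = p / (p - 1). Proof. by []. Qed.

Lemma pc_gt1 : 1 < pconj p.
Proof.
have h1 := p1_gt0; rewrite pcE ltr_pdivlMr // mul1r.
by rewrite ltrBlDr ltrDl ltr01.
Qed.
Lemma pc_gt0 : 0 < pconj p. Proof. by apply: lt_trans pc_gt1. Qed.

Lemma pc_inv : p^-1 + (pconj p)^-1 = 1.
Proof.
have h1 := p1_gt0; have h0 := p_gt0.
by rewrite pcE invfM invrK; field; rewrite gt_eqF.
Qed.

Lemma pc_m1 : (pconj p - 1) * (p - 1) = 1.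
Proof.
have h1 := p1_gt0; rewrite pcE; field; by rewrite gt_eqF.
Qed.

Lemma pc_m1p : (pconj p - 1) * p = pconj p.
Proof.
have h1 := p1_gt0; rewrite pcE; field; by rewrite gt_eqF.
Qed.

Lemma p_m1pc : (p - 1) * pconj p = p.
Proof.
have h1 := p1_gt0; rewrite pcE; field; by rewrite gt_eqF.
Qed.

Lemma pc_m1_neq0 : pconj p - 1 != 0.
Proof. by rewrite subr_eq0 gt_eqF // pc_gt1. Qed.
Lemma p_m1_neq0 : p - 1 != 0.
Proof. by rewrite gt_eqF // p1_gt0. Qed.

Lemma young a b : 0 <= a -> 0 <= b -> a * b <= a `^ p / p + b `^ pconj p / pconj p.
Proof.
move=> a0 b0; apply: conjugate_powR => //; [exact: p_gt0|exact: pc_gt0|exact: pc_inv].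
Qed.

End Pow.

Section Dual.
Context {R : realType} {X : normedModType R}.
Variables (p : R) (J : X -> X -> R) (Jps : (X -> R) -> X).
Hypothesis hp : 1 < p.
Hypothesis hJ : forall z : X, is_duality p z (J z).
Hypothesis hJps : forall f : X -> R, is_functional f -> is_dual_duality (pconj p) f (Jps f).

Local Notation q := (pconj p).
Implicit Types (f g : X -> R) (z u : X).

Lemma J_func z : is_functional (J z). Proof. by case: (hJ z). Qed.
Lemma J_self z : J z z = `|z| `^ p. Proof. by case: (hJ z) => _ []. Qed.
Lemma J_dn z : dnorm (J z) = `|z| `^ (p - 1). Proof. by case: (hJ z) => _ []. Qed.

Lemma Jps_val f : is_functional f -> f (Jps f) = dnorm f `^ q.
Proof. by move=> /hJps []. Qed.
Lemma Jps_norm f : is_functional f -> `|Jps f| = dnorm f `^ (q - 1).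
Proof. by move=> /hJps []. Qed.
Lemma Jps_normp f : is_functional f -> `|Jps f| `^ p = dnorm f `^ q.
Proof. by move=> hf; rewrite Jps_norm // -powRrM (pc_m1p hp). Qed.

Lemma young_f f z : is_functional f ->
  f z <= `|z| `^ p / p + dnorm f `^ q / q.
Proof.
move=> /functionalP [hl hb]; apply: le_trans (ler_norm _) _.
apply: le_trans (dn_bound z hl hb) _; rewrite mulrC.
by apply: young => //; apply: dn_ge0.
Qed.

Lemma young_max f z : is_functional f ->
  f z - `|z| `^ p / p <= f (Jps f) - `|Jps f| `^ p / p.
Proof.
move=> hf; rewrite Jps_val // Jps_normp //.
have h := young_f z hf.
have e : dnorm f `^ q - dnorm f `^ q / p = dnorm f `^ q / q.
  have := pc_inv hp; move=> hi.
  rewrite -[K in K - _]mulr1 -hi; ring.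
rewrite e; lra.
Qed.

Lemma Dp_ge0 x z : 0 <= Dp p J x z.
Proof.
rewrite /Dp; have := young_f z (J_func x); rewrite J_dn -powRrM (p_m1pc hp) // => h.
lra.
Qed.

Lemma normrZ1 (u : X) : u != 0 -> `| (`|u|^-1 *: u) | = 1.
Proof.
move=> u0; rewrite normrZ normfV normr_id mulVf //.
by rewrite normr_eq0.
Qed.

Lemma JJps (hs : smooth X) f : is_functional f -> J (Jps f) = f.
Proof.
move=> hf; have [hl hb] := functionalP f; have {hl hb} [hl hb] := hl hf.
set u := Jps f; set d := dnorm f.
have d0 : 0 <= d by apply: dn_ge0.
have q0 : 0 < q by apply: (pc_gt0 hp).
rewrite le_eqVlt in d0; case/orP: d0 => [/eqP d0|d0].
  have f0 := dn_eq0 hl hb (esym d0).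
  have u0 : u = 0.
    apply/eqP; rewrite -normr_eq0 /u Jps_norm // -/d -d0 powR0 //.
    exact: (pc_m1_neq0 hp).
  have g0 := dn_eq0 (func_lin (J_func 0)) (func_bnd (J_func 0)).
  rewrite J_dn normr0 powR0 ?(p_m1_neq0 hp) // in g0.
  by apply: funext => z; rewrite u0 g0 // f0.
have nu : `|u| = d `^ (q - 1) by rewrite /u Jps_norm.
have nu0 : 0 < `|u| by rewrite nu powR_gt0.
have u0 : u != 0 by rewrite -normr_eq0 gt_eqF.
have fu : f u = d * `|u|.
  by rewrite /u Jps_val // -/d nu mulr_powRB1 // ltW.
have gu : J u u = d * `|u|.
  by rewrite J_self nu -powRrM (pc_m1p hp) mulr_powRB1 // ltW.
have gd : dnorm (J u) = d.
  by rewrite J_dn nu -powRrM (pc_m1 hp) powRr1 // ltW.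
set F := fun z => d^-1 * f z; set G := fun z => d^-1 * J u z.
have hF : is_functional F by apply: func_scale.
have hG : is_functional G by apply: func_scale; apply: J_func.
have dF : dnorm F = 1.
  by rewrite /F dn_scale // normfV gtr0_norm // mulVf // gt_eqF.
have dG : dnorm G = 1.
  rewrite /G dn_scale ?gd ?normfV ?gtr0_norm ?mulVf ?gt_eqF //.
    exact: func_lin (J_func u).
  exact: func_bnd (J_func u).
have hFu : F (`|u|^-1 *: u) = 1.
  by rewrite /F linZ // fu; field; rewrite !gt_eqF.
have hGu : G (`|u|^-1 *: u) = 1.
  by rewrite /G linZ ?gu; [field; rewrite !gt_eqF | exact: func_lin (J_func u)].
have := hs _ (normrZ1 u0) F G hF hG dF dG hFu hGu => hFG.
apply: funext => z; have := congr1 (fun h => h z) hFG; rewrite /F /G => e.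
have := congr1 (fun w => d * w) e; rewrite !mulrA mulfV ?gt_eqF // !mul1r.
by move=> ->.
Qed.

Lemma JpsJ (hu : uniformly_convex X) z : Jps (J z) = z.
Proof.
have hg := J_func z; have [hl hb] := (func_lin hg, func_bnd hg).
set u := Jps (J z).
have nu : `|u| = `|z|.
  rewrite /u Jps_norm // J_dn -powRrM mulrC (pc_m1 hp) powRr1 //.
have [ez|z0] := eqVneq z 0.
  by rewrite [in RHS]ez; apply/eqP; rewrite -normr_eq0 nu ez normr0.
have nz : 0 < `|z| by rewrite normr_gt0.
have gu : J z u = `|z| `^ p.
  by rewrite /u Jps_val // J_dn -powRrM (p_m1pc hp).
have [//|neq] := eqVneq u z.
exfalso.
pose uh := `|z|^-1 *: u; pose zh := `|z|^-1 *: z.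
have nuh : `|uh| = 1 by rewrite /uh normrZ normfV normr_id nu mulVf // gt_eqF.
have nzh : `|zh| = 1 by rewrite /zh normrZ normfV normr_id mulVf // gt_eqF.
have hm : 1 <= `|2^-1 *: (uh + zh)|.
  have e : 2^-1 *: (uh + zh) = `|z|^-1 *: (2^-1 *: (u + z)).
    by rewrite /uh /zh -scalerDr !scalerA mulrC.
  rewrite e normrZ normfV normr_id ler_pdivlMl // mulr1.
  have hb2 := dn_bound (2^-1 *: (u + z)) hl hb.
  rewrite linZ // linD // gu J_self J_dn in hb2.
  have e2 : 2^-1 * (`|z| `^ p + `|z| `^ p) = `|z| * `|z| `^ (p - 1).
    by rewrite mulr_powRB1 ?ltW ?(p_gt0 hp) //; field.
  rewrite e2 in hb2.
  have hz1 : 0 < `|z| `^ (p - 1) by rewrite powR_gt0.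
  have hb3 : `|z| * `|z| `^ (p - 1) <= `|2^-1 *: (u + z)| * `|z| `^ (p - 1).
    by apply: le_trans (ler_norm _) _; rewrite [K in _ <= K]mulrC.
  by rewrite ler_pM2r in hb3.
have e0 : 0 < `|uh - zh|.
  rewrite normr_gt0 subr_eq0; apply/eqP => e.
  have : `|z| *: uh = `|z| *: zh by rewrite e.
  by rewrite /uh /zh !scalerA mulfV ?gt_eqF // !scale1r; apply/eqP.
have e2 : `|uh - zh| <= 2.
  by apply: le_trans (ler_normB _ _) _; rewrite nuh nzh.
have [de de0 hde] := hu _ e0 e2.
have h1 : `|uh| <= 1 by rewrite nuh.
have h2 : `|zh| <= 1 by rewrite nzh.
have := hde uh zh h1 h2 (lexx _).
move=> h; have := le_trans hm h; lra.
Qed.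

End Dual.


Lemma powR_cont_at {R : realType} (a y0 : R) : 0 < y0 -> forall eps, 0 < eps ->
  exists2 rho, 0 < rho & forall y, `|y0 - y| < rho -> `|y0 `^ a - y `^ a| < eps.
Proof.
move=> y00 eps e0.
have hd : derivable (@powR R ^~ a) y0 1 by apply: derivable_powR; rewrite in_itv /= andbT.
have hc : {for y0, continuous (@powR R ^~ a)}.
  by apply/differentiable_continuous; rewrite -derivable1_diffP.
move: hc => /cvgrPdist_lt /(_ eps e0) /nbhs_normP [rho rho0 hr].
by exists rho => // y hy; apply: hr.
Qed.

Section Upper.
Context {R : realType} {X : normedModType R}.
Hypothesis hu : uniformly_convex X.
Implicit Types (f e : X -> R).

Lemma norm_upper f e uh : is_functional f -> is_functional e -> `|uh| = 1 ->
  0 < dnorm f -> f uh = dnorm f ->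
  forall eta, 0 < eta -> exists2 tau, 0 < tau & forall eps, `|eps| <= tau ->
    dnorm (fun z => f z + eps * e z) <= dnorm f + eps * e uh + `|eps| * eta.
Proof.
move=> hf he nuh N0p fuh eta eta0.
have [lf bf] := (func_lin hf, func_bnd hf); have [le be] := (func_lin he, func_bnd he).
set N0 := dnorm f in N0p fuh *; set D := dnorm e.
have D0 : 0 <= D by apply: dn_ge0.
have D1 : 0 < D + 1 by rewrite ltr_wpDl.
set c := Num.min (eta / (D + 1)) 2.
have c0 : 0 < c by rewrite /c lt_min; apply/andP; split => //; apply: divr_gt0.
have c2 : c <= 2 by rewrite /c ge_min lexx orbT.
have cle : c <= eta / (D + 1) by rewrite /c ge_min lexx.
have [de de0 hde] := hu c0 c2.
pose tau := de * N0 / (2 * (D + 1)).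
have tau0 : 0 < tau by rewrite /tau divr_gt0 ?mulr_gt0.
exists tau => // eps heps.
have ea0 : 0 <= `|eps| * eta by rewrite mulr_ge0 // ltW.
have key : forall x, `|x| <= 1 -> f x + eps * e x <= N0 + eps * e uh + `|eps| * eta.
  move=> x nx.
  have ex : `|e x| <= D.
    apply: le_trans (dn_bound x le be) _; rewrite -[leRHS]mulr1; exact: ler_wpM2l.
  have eu : `|e uh| <= D by apply: le_trans (dn_bound uh le be) _; rewrite nuh mulr1.
  have fx : f x <= N0.
    apply: le_trans (ler_norm _) _; apply: le_trans (dn_bound x lf bf) _.
    rewrite -[leRHS]mulr1; apply: ler_wpM2l => //; exact: ltW.
  have t1 : eps * e x <= `|eps| * D.
    apply: le_trans (ler_norm _) _; rewrite normrM; exact: ler_wpM2l.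
  have t2 : - (`|eps| * D) <= eps * e uh.
    rewrite lerNl; apply: le_trans (ler_norm _) _; rewrite normrN normrM; exact: ler_wpM2l.
  case: (lerP (f x) (N0 - 2 * (`|eps| * D))) => hfx.
    lra.
  set m := 2^-1 *: (x + uh).
  have fm : f m = 2^-1 * (f x + N0).
    by rewrite /m (linZ lf) (linD lf) fuh.
  have nm : `|m| <= 1.
    rewrite /m normrZ; apply: le_trans (ler_wpM2l _ (ler_normD _ _)) _.
      by rewrite normr_ge0.
    rewrite nuh gtr0_norm ?invr_gt0 //; lra.
  have fmN : f m <= N0 * `|m|.
    apply: le_trans (ler_norm _) _; exact: dn_bound.
  have dist : `|x - uh| < c.
    rewrite ltNge; apply/negP => hc.
    have nuh1 : `|uh| <= 1 by rewrite nuh.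
    have := hde x uh nx nuh1 hc; rewrite -/m => hm.
    have h1 : N0 * `|m| <= N0 * (1 - de) by apply: ler_wpM2l => //; exact: ltW.
    have h2 : `|eps| * D <= tau * D by apply: ler_wpM2r.
    have h3 : tau * D < de * N0.
      have -> : tau * D = (de * N0) * (D / (2 * (D + 1))) by rewrite /tau; ring.
      rewrite -[K in _ < K]mulr1 ltr_pM2l ?mulr_gt0 //.
      rewrite ltr_pdivrMr ?mulr_gt0 //; lra.
    have h4 : N0 * (1 - de) = N0 - de * N0 by ring.
    lra.
  have ex2 : eps * e x = eps * e uh + eps * e (x - uh) by rewrite (linB le); ring.
  have t3 : eps * e (x - uh) <= `|eps| * eta.
    apply: le_trans (ler_norm _) _; rewrite normrM; apply: ler_wpM2l => //.
    apply: le_trans (dn_bound _ le be) _.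
    apply: le_trans (ler_wpM2l D0 (ltW (lt_le_trans dist cle))) _.
    have -> : D * (eta / (D + 1)) = eta * (D / (D + 1)) by ring.
    rewrite -[leRHS]mulr1 ler_pM2l // ler_pdivrMr //; lra.
  lra.
apply: dn_le => x nx.
have [gx0|gx0] := lerP 0 (f x + eps * e x).
  by rewrite ger0_norm //; apply: key.
rewrite ltr0_norm //.
have := key (- x); rewrite normrN (linN lf) (linN le) => /(_ nx).
by rewrite mulrN -opprD.
Qed.

End Upper.


Section FOC.
Context {R : realType} {X : normedModType R}.
Variables (p : R) (Jps : (X -> R) -> X).
Hypothesis hp : 1 < p.
Hypothesis hJps : forall f : X -> R, is_functional f -> is_dual_duality (pconj p) f (Jps f).
Hypothesis hu : uniformly_convex X.
Local Notation q := (pconj p).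
Implicit Types (f e : X -> R).

Lemma conv_bound (a c : R) : 0 <= a -> 0 <= c ->
  q^-1 * c `^ q - q^-1 * a `^ q <= c `^ (q - 1) * (c - a).
Proof.
move=> a0 c0; have q0 := pc_gt0 hp.
have hy := @conjugate_powR R a (c `^ (q - 1)) q p a0 (powR_ge0 _ _) q0 (p_gt0 hp).
have hi : q^-1 + p^-1 = 1 by rewrite addrC; exact: pc_inv.
move: (hy hi); rewrite -powRrM (pc_m1p hp) => h.
have e : c `^ (q - 1) * (c - a) = c `^ q - a * c `^ (q - 1).
  by rewrite -(mulr_powRB1 c0 q0); ring.
rewrite e.
have e2 : c `^ q = c `^ q * q^-1 + c `^ q * p^-1 by rewrite -mulrDr [_^-1 + _]addrC pc_inv // mulr1.
move: h; rewrite /= [a `^ q / q]mulrC [c `^ q / p]mulrC => h.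
rewrite [K in K - a * _]e2; lra.
Qed.

Lemma gfoc f e b : is_functional f -> is_functional e ->
  (forall eps, q^-1 * dnorm f `^ q <= q^-1 * dnorm (fun z => f z + eps * e z) `^ q + eps * b) ->
  e (Jps f) + b = 0.
Proof.
move=> hf he hyp.
have [lf bf] := (func_lin hf, func_bnd hf); have [le be] := (func_lin he, func_bnd he).
have q0 := pc_gt0 hp; have q1 := pc_gt1 hp.
have q1p : 0 < q - 1 by rewrite subr_gt0.
set N0 := dnorm f in hyp *; set D := dnorm e.
have D0 : 0 <= D by apply: dn_ge0.
have N00 : 0 <= N0 by apply: dn_ge0.
have hfe : forall eps, is_functional (fun z => f z + eps * e z).
  by move=> eps; apply: func_add => //; apply: func_scale.
rewrite le_eqVlt in N00; case/orP: N00 => [/eqP N0e|N0p].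
  have f0 := dn_eq0 lf bf (esym N0e).
  have u0 : Jps f = 0.
    by apply/eqP; rewrite -normr_eq0 (Jps_norm hJps hf) -/N0 -N0e powR0 // (pc_m1_neq0 hp).
  rewrite u0 (lin0 le) add0r.
  have hyp' : forall eps, 0 <= q^-1 * (`|eps| * D) `^ q + eps * b.
    move=> eps; have := hyp eps; rewrite -N0e powR0 ?gt_eqF // mulr0.
    have -> : (fun z => f z + eps * e z) = (fun z => eps * e z).
      by apply: funext => z; rewrite f0 add0r.
    by rewrite dn_scale.
  apply/eqP; apply: contraT => bn0.
  have b2 : 0 < b * b by rewrite -expr2 exprn_even_gt0.
  set K := (`|b| * D) `^ q.
  have K0 : 0 <= K by apply: powR_ge0.
  set cc := b * b * q / (2 * (K + 1)).
  have K1 : 0 < K + 1 by rewrite ltr_wpDl.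
  have cc0 : 0 < cc by rewrite /cc; apply: divr_gt0; apply: mulr_gt0.
  set t := cc `^ ((q - 1)^-1).
  have t0 : 0 < t by apply: powR_gt0.
  have ht : t `^ (q - 1) = cc.
    by rewrite /t -powRrM mulVf ?gt_eqF // powRr1 // ltW.
  have hbd : 0 <= `|b| * D by rewrite mulr_ge0.
  have := hyp' (- (t * b)).
  rewrite normrN normrM (gtr0_norm t0) -mulrA (powRM q (ltW t0) hbd) -/K.
  rewrite -(mulr_powRB1 (ltW t0) q0) ht => h.
  have h2 : t * (b * b) <= t * (q^-1 * cc * K).
    rewrite mulNr in h; move: h; rewrite -mulrA; lra.
  rewrite ler_pM2l // in h2.
  have e3 : q^-1 * cc * K = b * b * (K / (2 * (K + 1))).
    by rewrite /cc; field; rewrite ?gt_eqF // ?mulr_gt0.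
  rewrite e3 in h2.
  have h4 : K / (2 * (K + 1)) < 1.
    by rewrite ltr_pdivrMr ?mulr_gt0 //; lra.
  have := ltr_pM2l b2; move=> /(_ (K / (2 * (K + 1))) 1); rewrite h4 mulr1 => h5.
  by rewrite -(negbK (b * b <= _)) -ltNge h5 in h2.
set u := Jps f.
have nu : `|u| = N0 `^ (q - 1) by rewrite /u (Jps_norm hJps hf).
set P := N0 `^ (q - 1) in nu.
have P0 : 0 < P by rewrite /P powR_gt0.
have u0 : u != 0 by rewrite -normr_eq0 nu gt_eqF.
set uh := `|u|^-1 *: u.
have nuh : `|uh| = 1 by apply: normrZ1.
have fu : f u = N0 * P by rewrite /u (Jps_val hJps hf) -/N0 /P mulr_powRB1 // ltW.
have fuh : f uh = N0 by rewrite /uh (linZ lf) fu nu; field; rewrite gt_eqF.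
set s := e uh.
have eu : e u = P * s.
  by rewrite /s /uh (linZ le) nu mulrA mulfV ?gt_eqF // mul1r.
rewrite eu; set a := P * s + b.
apply/eqP; apply: contraT => a0.
have pa : 0 < `|a| by rewrite normr_gt0.
have s1 : 0 < `|s| + 1 by rewrite ltr_wpDl.
set kap := Num.min 1 (`|a| / (4 * (`|s| + 1))).
have kap0 : 0 < kap.
  by rewrite /kap lt_min ltr01 /= divr_gt0 // mulr_gt0.
have kap1 : kap <= 1 by rewrite /kap ge_min lexx.
have kap2 : kap <= `|a| / (4 * (`|s| + 1)) by rewrite /kap ge_min lexx orbT.
have [rho rho0 hrho] := powR_cont_at (q - 1) N0p kap0.
set eta := `|a| / (4 * (P + 1)).
have eta0 : 0 < eta by rewrite divr_gt0 // mulr_gt0 // ltr_wpDl // ltW.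
have [tau tau0 htau] := norm_upper hu hf he nuh N0p fuh eta0.
set t := Num.min tau (rho / (2 * (`|s| + eta + 1))).
have se0 : 0 < `|s| + eta + 1 by rewrite ltr_wpDl // addr_ge0 // ltW.
have t0 : 0 < t by rewrite /t lt_min tau0 /= divr_gt0 // mulr_gt0.
have ttau : t <= tau by rewrite /t ge_min lexx.
have trho : t * (`|s| + eta) < rho.
  have : t <= rho / (2 * (`|s| + eta + 1)) by rewrite /t ge_min lexx orbT.
  rewrite ler_pdivlMr ?mulr_gt0 // => h.
  have : t * (`|s| + eta) <= t * (`|s| + eta + 1) by rewrite ler_pM2l // lerDl.
  have : 0 < t * (`|s| + eta + 1) by rewrite mulr_gt0.
  lra.
have step : forall eps, `|eps| = t ->
   exists2 Y, `|P - Y| < kap /\ 0 <= Y & - (eps * b) <= Y * (eps * s + t * eta).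
  move=> eps heps.
  set y := dnorm (fun z => f z + eps * e z).
  have y0 : 0 <= y by apply: dn_ge0; apply: func_bnd.
  set yB := N0 + eps * e uh + `|eps| * eta.
  have hy : y <= yB by apply: htau; rewrite heps.
  have yB0 : 0 <= yB by apply: le_trans hy.
  have hpow : y `^ q <= yB `^ q.
    have := @ge0_ler_powR R q (ltW q0) y yB; rewrite !nnegrE; exact.
  have hc := conv_bound (ltW N0p) yB0.
  have hh := hyp eps; rewrite -/y in hh.
  have hq : q^-1 * y `^ q <= q^-1 * yB `^ q by rewrite ler_pM2l // invr_gt0.
  exists (yB `^ (q - 1)); last first.
    have -> : eps * s + t * eta = yB - N0 by rewrite /yB heps -/s; ring.
    lra.
  split; last exact: powR_ge0.
  apply: hrho.
  have -> : N0 - yB = - (eps * s + t * eta) by rewrite /yB heps -/s; ring.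
  rewrite normrN; apply: le_lt_trans (ler_normD _ _) _.
  rewrite normrM heps (ger0_norm (mulr_ge0 (ltW t0) (ltW eta0))).
  have : `|s| + eta = `|s| + eta by [].
  lra.
have [Y1 [hY1 Y10] h1] := step t (gtr0_norm t0).
have hnt : `|- t| = t by rewrite normrN gtr0_norm.
have [Y2 [hY2 Y20] h2] := step (- t) hnt.
have h1' : - b <= Y1 * s + Y1 * eta.
  have : t * (- b) <= t * (Y1 * s + Y1 * eta).
    lra.
  by rewrite ler_pM2l.
have h2' : b <= - (Y2 * s) + Y2 * eta.
  have : t * b <= t * (- (Y2 * s) + Y2 * eta).
    lra.
  by rewrite ler_pM2l.
have bnd1 : forall Y, `|P - Y| < kap -> 0 <= Y -> `|(P - Y) * s| <= `|a| / 4 /\ Y * eta <= `|a| / 4.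
  move=> Y hY Y0; split.
    rewrite normrM; apply: le_trans (ler_wpM2r (normr_ge0 s) (ltW (lt_le_trans hY kap2))) _.
    have -> : `|a| / (4 * (`|s| + 1)) * `|s| = (`|a| / 4) * (`|s| / (`|s| + 1)).
      by rewrite !invfM; ring.
    rewrite -[leRHS]mulr1 ler_pM2l ?divr_gt0 // ler_pdivrMr //; lra.
  have YP : Y <= P + 1.
    have := ler_norm (Y - P); rewrite distrC; lra.
  apply: le_trans (ler_wpM2r (ltW eta0) YP) _.
  have P1 : 0 < P + 1 by rewrite ltr_wpDl // ltW.
  have -> : (P + 1) * eta = `|a| / 4 by rewrite /eta; field; rewrite gt_eqF.
  by [].
have [c1 d1] := bnd1 Y1 hY1 Y10.
have [c2 d2] := bnd1 Y2 hY2 Y20.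
have r1 := ler_norm ((P - Y1) * s).
have r2 := ler_normlW (lexx `|(P - Y2) * s|).
have r2' := ler_norm ((P - Y2) * s).
have ea : a = P * s + b by [].
have ab := ler_norm a; have abN := ler_norm (- a); rewrite normrN in abN.
have e1 : (P - Y1) * s = P * s - Y1 * s by ring.
have e2 : (P - Y2) * s = P * s - Y2 * s by ring.
have nr1 : - ((P - Y1) * s) <= `|(P - Y1) * s|.
  by rewrite -normrN; apply: ler_norm.
have ha1 : a <= `|a| / 2 by lra.
have ha2 : - a <= `|a| / 2 by lra.
have : `|a| <= `|a| / 2 by rewrite ler_norml; apply/andP; split; lra.
lra.
Qed.

End FOC.

From mathcomp Require Import zify.


Lemma idx (N m k : nat) : (0 < N)%N -> (k < (Nn N m).-1)%N -> (0 < m)%N /\ (Nprev N m - (Nn N m).-1 + k < Nn N m.-1)%N.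
Proof. rewrite /Nn /Nprev; lia. Qed.
Lemma Nprev_pred (N m : nat) : (0 < m)%N -> Nprev N m = Nn N m.-1.
Proof. rewrite /Nn /Nprev; lia. Qed.
Lemma Nn_last (N m k : nat) : (0 < N)%N -> (k < Nn N m)%N -> (k <= (Nn N m).-1)%N.
Proof. rewrite /Nn; lia. Qed.

Section Lc.
Context {R : realType} {V : Type}.

Lemma lincomb_ext {W : Type} (K : nat) (c : nat -> R) (F : nat -> V -> R) (G : nat -> W -> R) z w :
  (forall k, (k < K)%N -> F k z = G k w) -> lincomb K c F z = lincomb K c G w.
Proof. by move=> h; rewrite /lincomb; apply: eq_bigr => i _; rewrite h. Qed.

Lemma lincomb_neg (K : nat) (c : nat -> R) (F : nat -> V -> R) z :
  lincomb K (fun k => - c k) F z = - lincomb K c F z.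
Proof. by rewrite /lincomb -sumrN; apply: eq_bigr => i _; rewrite mulNr. Qed.

Lemma sum_delta (K k : nat) (c0 : nat -> R) (F : nat -> R) (eps : R) : (k < K)%N ->
  \sum_(j < K) (c0 j + (if nat_of_ord j == k then eps else 0)) * F j =
  \sum_(j < K) c0 j * F j + eps * F k.
Proof.
move=> hk.
rewrite (eq_bigr (fun j : 'I_K => c0 j * F j + (if nat_of_ord j == k then eps * F k else 0))); last first.
  by move=> j _; case: (eqVneq (nat_of_ord j) k) => [->|_]; rewrite ?eqxx /=; ring.
rewrite big_split /=; congr (_ + _).
rewrite (bigD1 (Ordinal hk)) //= eqxx big1 ?addr0 // => j hj.
have : (nat_of_ord j) != k.
  by apply: contra hj => /eqP e; apply/eqP; apply: val_inj.
by move=> /negbTE ->.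
Qed.

End Lc.

Section FOC2.
Context {R : realType} {X : normedModType R}.
Variables (p : R) (Jps : (X -> R) -> X).
Hypothesis hp : 1 < p.
Hypothesis hJps : forall f : X -> R, is_functional f -> is_dual_duality (pconj p) f (Jps f).
Hypothesis hu : uniformly_convex X.
Local Notation q := (pconj p).

Lemma foc_lincomb (K : nat) (g : X -> R) (w : nat -> X -> R) (beta : nat -> R) (c0 : nat -> R) :
  is_functional g -> (forall k, (k < K)%N -> is_functional (w k)) ->
  (forall c, q^-1 * dnorm (fun z => g z - lincomb K c0 w z) `^ q + \sum_(k < K) c0 k * beta k <=
             q^-1 * dnorm (fun z => g z - lincomb K c w z) `^ q + \sum_(k < K) c k * beta k) ->
  forall k, (k < K)%N -> w k (Jps (fun z => g z - lincomb K c0 w z)) = beta k.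
Proof.
move=> hg hw hmin k hk.
have hf : is_functional (fun z => g z - lincomb K c0 w z) by apply: func_sub => //; apply: func_lincomb.
have he : is_functional (fun z => - w k z) by apply: func_opp; apply: hw.
have := gfoc hp hJps hu (b := beta k) hf he.
have H : forall eps, q^-1 * dnorm (fun z => g z - lincomb K c0 w z) `^ q <=
   q^-1 * dnorm (fun z => (g z - lincomb K c0 w z) + eps * - w k z) `^ q + eps * beta k.
  move=> eps.
  have := hmin (fun j => c0 j + (if j == k then eps else 0)).
  rewrite sum_delta //.
  have -> : (fun z => g z - lincomb K (fun j => c0 j + (if j == k then eps else 0)) w z) =
            (fun z => (g z - lincomb K c0 w z) + eps * - w k z).
    apply: funext => z; rewrite /lincomb.
    have := sum_delta c0 (fun j => w j z) eps hk; rewrite /= => ->.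
    ring.
  lra.
move=> /(_ H) e; lra.
Qed.

End FOC2.



Section Main.
Context {R : realType} {X Y : completeNormedModType R}.
Variables (A : X -> Y) (y : Y) (p r : R) (N : nat)
  (J : X -> X -> R) (Jps : (X -> R) -> X) (Jr : Y -> Y -> R)
  (x : nat -> X) (v : nat -> nat -> X -> R) (ws : nat -> nat -> Y -> R)
  (s t : nat -> nat -> R) (n : nat).
Hypothesis hUC : uniformly_convex X.
Hypothesis hS : smooth X.
Hypothesis hA : bounded_linear A.
Hypothesis hp : 1 < p.
Hypothesis hN : (0 < N)%N.
Hypothesis hJ : forall z : X, is_duality p z (J z).
Hypothesis hJps : forall f : X -> R, is_functional f -> is_dual_duality (pconj p) f (Jps f).
Hypothesis hJr : forall w : Y, is_duality r w (Jr w).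
Hypothesis halgo : forall m : nat, (m <= n)%N -> algo_step A y p N J Jps Jr x v ws s t m.
Local Notation q := (pconj p).

Lemma algoE m : (m <= n)%N ->
  (forall c, dnorm (fun z => Jr (A (x m) - y) (A z) - lincomb (Nprev N m) (s m) (v m.-1) z) `^ q <=
     dnorm (fun z => Jr (A (x m) - y) (A z) - lincomb (Nprev N m) c (v m.-1) z) `^ q) /\
  v m (Nn N m).-1 = (fun z => Jr (A (x m) - y) (A z) - lincomb (Nprev N m) (s m) (v m.-1) z) /\
  ws m (Nn N m).-1 = (fun z => Jr (A (x m) - y) z - lincomb (Nprev N m) (s m) (ws m.-1) z) /\
  (forall k, (k < (Nn N m).-1)%N -> v m k = v m.-1 (Nprev N m - (Nn N m).-1 + k)%N /\
                                    ws m k = ws m.-1 (Nprev N m - (Nn N m).-1 + k)%N) /\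
  (forall c, q^-1 * dnorm (fun z => J (x m) z - lincomb (Nn N m) (t m) (v m) z) `^ q
             + \sum_(k < Nn N m) t m k * ws m k y <=
             q^-1 * dnorm (fun z => J (x m) z - lincomb (Nn N m) c (v m) z) `^ q
             + \sum_(k < Nn N m) c k * ws m k y) /\
  x m.+1 = Jps (fun z => J (x m) z - lincomb (Nn N m) (t m) (v m) z).
Proof.
move=> hm; have := halgo hm; rewrite /algo_step.
move=> [_ [h1 [h2 [h3 [h4 [h5 h6]]]]]].
split; first exact: h1. split; first exact: h2. split; first exact: h3.
split; first exact: h4. split; first exact: h5. exact: h6.
Qed.

Lemma Jr_func w : is_functional (Jr w). Proof. by case: (hJr w). Qed.

Definition INVP m := forall k, (k < Nn N m)%N ->
  is_functional (ws m k) /\ v m k = (fun z => ws m k (A z)).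

Lemma INV_step m : (m <= n)%N ->
  (forall k, (k < Nprev N m)%N -> is_functional (ws m.-1 k) /\ v m.-1 k = (fun z => ws m.-1 k (A z))) ->
  INVP m.
Proof.
move=> hm prev k hk.
have [_ [h2 [h3 [h4 _]]]] := algoE hm.
have := Nn_last hN hk; rewrite leq_eqVlt => /orP [/eqP ek|lk].
  rewrite ek h2 h3; split.
    apply: func_sub; first exact: Jr_func.
    by apply: func_lincomb => j hj; case: (prev j hj).
  apply: funext => z; congr (_ - _).
  by apply: lincomb_ext => j hj; case: (prev j hj) => _ ->.
have [m0 hj] := idx hN lk.
have [-> ->] := h4 k lk.
rewrite -Nprev_pred // in hj; exact: prev _ hj.
Qed.

Lemma INV m : (m <= n)%N -> INVP m.
Proof.
elim: m => [|m IH] hm; apply: INV_step => // k hk.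
by apply: (IH (ltnW hm)); rewrite /Nprev /Nn in hk *.
Qed.

Lemma ws_func m k : (m <= n)%N -> (k < Nn N m)%N -> is_functional (ws m k).
Proof. by move=> hm hk; case: (INV hm hk). Qed.

Lemma v_eq m k : (m <= n)%N -> (k < Nn N m)%N -> v m k = (fun z => ws m k (A z)).
Proof. by move=> hm hk; case: (INV hm hk). Qed.

Lemma v_func m k : (m <= n)%N -> (k < Nn N m)%N -> is_functional (v m k).
Proof. by move=> hm hk; rewrite (v_eq hm hk); apply: func_comp => //; apply: ws_func. Qed.

Lemma g_func m : (m <= n)%N -> is_functional (fun z => J (x m) z - lincomb (Nn N m) (t m) (v m) z).
Proof.
move=> hm; apply: func_sub; first exact: J_func hJ (x m).
by apply: func_lincomb => k hk; apply: v_func.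
Qed.

Lemma xstep m : (m <= n)%N ->
  J (x m.+1) = (fun z => J (x m) z - lincomb (Nn N m) (t m) (v m) z).
Proof.
move=> hm; have [_ [_ [_ [_ [_ hx]]]]] := algoE hm.
by rewrite hx; apply: (JJps hp hJ hJps hS); apply: g_func.
Qed.


Lemma part_a z : A z = y -> forall k, (k < Nn N n)%N -> v n k z = ws n k y.
Proof. by move=> hz k hk; rewrite (v_eq (leqnn n) hk) /= hz. Qed.

Lemma part_b1 m : (m <= n)%N ->
  (fun z => J (x m) z - J (x 0%N) z) =
  (fun z => \sum_(i < m) lincomb (Nn N i) (fun k => - t i k) (v i) z).
Proof.
elim: m => [|m IH] hm.
  by apply: funext => z; rewrite subrr big_ord0.
apply: funext => z.
have e := congr1 (fun h => h z) (IH (ltnW hm)); simpl in e.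
rewrite big_ord_recr /= -e (xstep (ltnW hm)) /= lincomb_neg; ring.
Qed.

Lemma part_b2 : in_closure_range_adj A (fun z => J (x n) z - J (x 0%N) z).
Proof.
move=> eps e0.
exists (fun w => \sum_(i < n) lincomb (Nn N i) (fun k => - t i k) (ws i) w); split.
  apply: (func_sum (F := fun i w => lincomb (Nn N i) (fun k => - t i k) (ws i) w)) => i hi.
  by apply: func_lincomb => k hk; apply: ws_func => //; exact: ltnW.
apply: le_lt_trans (dn_le (B := 0) _) e0 => u _.
have e := congr1 (fun h => h u) (part_b1 (leqnn n)); simpl in e.
rewrite /= e normr_le0 subr_eq0; apply/eqP.
apply: eq_bigr => i _; apply: lincomb_ext => k hk.
by rewrite (v_eq _ hk) // ltnW.
Qed.

Lemma part_c_H k : (k < Nn N n)%N -> v n k (x n.+1) = ws n k y.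
Proof.
move=> hk; have [_ [_ [_ [_ [h5 h6]]]]] := algoE (leqnn n).
rewrite h6.
apply: (foc_lincomb hp hJps hUC (g := J (x n)) (w := v n) (beta := fun k => ws n k y)) => //.
  exact: J_func hJ (x n).
by move=> j hj; apply: v_func.
Qed.

Lemma part_c_min z : (forall k, (k < Nn N n)%N -> v n k z = ws n k y) ->
  Dp p J (x n) (x n.+1) <= Dp p J (x n) z.
Proof.
move=> hz.
have xs := xstep (leqnn n).
have eJ : forall w, J (x n) w = J (x n.+1) w + lincomb (Nn N n) (t n) (v n) w.
  by move=> w; rewrite xs /=; ring.
have Lz : lincomb (Nn N n) (t n) (v n) z = lincomb (Nn N n) (t n) (v n) (x n.+1).
  by apply: lincomb_ext => k hk; rewrite hz // part_c_H.
rewrite /Dp !eJ Lz (J_self hJ).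
have := Dp_ge0 hp hJ (x n.+1) z; rewrite /Dp => h.
have hi := pc_inv hp.
have e : q^-1 * `|x n.+1| `^ p + p^-1 * `|x n.+1| `^ p = `|x n.+1| `^ p.
  by rewrite -mulrDl addrC hi mul1r.
lra.
Qed.

Lemma part_c2 z : A z = y ->
  (exists c : nat -> R,
     J (x n.+1) = (fun z' => J (x n) z' + lincomb (Nn N n) c (v n) z')) /\
  (forall c : nat -> R,
     Dps p Jps (J z) (J (x n.+1)) <=
     Dps p Jps (J z) (fun z' => J (x n) z' + lincomb (Nn N n) c (v n) z')).
Proof.
move=> hz; split.
  exists (fun k => - t n k); rewrite (xstep (leqnn n)).
  by apply: funext => w; rewrite lincomb_neg.
move=> c; have [_ [_ [_ [_ [h5 _]]]]] := algoE (leqnn n).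
have ht := h5 (fun k => - c k).
have e1 : (fun z0 => J (x n) z0 - lincomb (Nn N n) (fun k => - c k) (v n) z0) =
          (fun z' => J (x n) z' + lincomb (Nn N n) c (v n) z').
  by apply: funext => w; rewrite lincomb_neg opprK.
rewrite e1 in ht.
have lz : forall c', lincomb (Nn N n) c' (v n) z = \sum_(k < Nn N n) c' k * ws n k y.
  by move=> c'; rewrite /lincomb; apply: eq_bigr => i _; rewrite (part_a hz (ltn_ord i)).
have es : \sum_(k < Nn N n) - c k * ws n k y = - \sum_(k < Nn N n) c k * ws n k y.
  by rewrite -sumrN; apply: eq_bigr => i _; rewrite mulNr.
rewrite /= es in ht.
rewrite /Dps (JpsJ hp hJ hJps hUC z) (xstep (leqnn n)) /= !lz.
lra.
Qed.

Lemma part_d :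
  let a := Jps (v n (Nn N n).-1) in
  let b := Jps (fun z => Jr (A (x n) - y) (A z)) in
  let Vperp := fun z : X => forall k : nat, (k < Nprev N n)%N -> v n.-1 k z = 0 in
  Vperp a /\ (forall z : X, Vperp z -> Dp p J b a <= Dp p J b z).
Proof.
move=> a b Vperp.
have [h1 [h2 _]] := algoE (leqnn n).
set u := fun z => Jr (A (x n) - y) (A z).
have hu : is_functional u by apply: func_comp => //; apply: Jr_func.
have prevf : forall k, (k < Nprev N n)%N -> is_functional (v n.-1 k).
  move=> k hk; have n0 : (0 < n)%N by move: hk; rewrite /Nprev; lia.
  apply: v_func; first exact: leq_pred.
  by rewrite -Nprev_pred.
set vnew := fun z => u z - lincomb (Nprev N n) (s n) (v n.-1) z.
have hv : is_functional vnew by apply: func_sub => //; apply: func_lincomb.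
have ea : a = Jps vnew by rewrite /a h2.
have Va : Vperp a.
  move=> k hk; rewrite ea.
  apply: (foc_lincomb hp hJps hUC (g := u) (w := v n.-1) (beta := fun _ => 0)) => //.
  move=> c; rewrite !big1 ?addr0 //; last by move=> i _; rewrite mulr0.
    by rewrite ler_pM2l ?invr_gt0 ?(pc_gt0 hp) //; apply: h1.
  by move=> i _; rewrite mulr0.
split => // z hz.
have uz : forall w, Vperp w -> u w = vnew w.
  move=> w hw; rewrite /vnew /lincomb big1 ?subr0 // => i _.
  by rewrite hw ?mulr0.
have Jb : J b = u by apply: (JJps hp hJ hJps hS).
rewrite /Dp Jb (uz _ hz) (uz _ Va) ea.
have := young_max hp hJps z hv.
lra.
Qed.

Lemma main_sec :
  let beta := fun m k => ws m k y in
  let H := fun z : X => forall k : nat, (k < Nn N n)%N -> v n k z = beta n k in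
  (forall z : X, A z = y -> H z) /\
  ((exists c : nat -> nat -> R,
      (fun z => J (x n) z - J (x 0%N) z) =
      (fun z => \sum_(m < n) lincomb (Nn N m) (c m) (v m) z)) /\
   in_closure_range_adj A (fun z => J (x n) z - J (x 0%N) z)) /\
  (H (x n.+1) /\ (forall z : X, H z -> Dp p J (x n) (x n.+1) <= Dp p J (x n) z)) /\
  (forall z : X, A z = y ->
     (exists c : nat -> R,
        J (x n.+1) = (fun z' => J (x n) z' + lincomb (Nn N n) c (v n) z')) /\
     (forall c : nat -> R,
        Dps p Jps (J z) (J (x n.+1)) <=
        Dps p Jps (J z) (fun z' => J (x n) z' + lincomb (Nn N n) c (v n) z'))) /\
  (let a := Jps (v n (Nn N n).-1) in
   let b := Jps (fun z => Jr (A (x n) - y) (A z)) in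
   let Vperp := fun z : X => forall k : nat, (k < Nprev N n)%N -> v n.-1 k z = 0 in
   Vperp a /\ (forall z : X, Vperp z -> Dp p J b a <= Dp p J b z)).
Proof.
move=> beta H.
split; first by move=> z hz k hk; apply: part_a.
split.
  split; last exact: part_b2.
  by exists (fun i k => - t i k); apply: part_b1.
split.
  split; first by move=> k hk; apply: part_c_H.
  by move=> z hz; apply: part_c_min.
split; first by move=> z hz; apply: part_c2.
exact: part_d.
Qed.

End Main.



Theorem mainTheorem6 (R : realType) (X Y : completeNormedModType R)
  (A : X -> Y) (y : Y) (p r : R) (N : nat)
  (J : X -> X -> R) (Jps : (X -> R) -> X) (Jr : Y -> Y -> R)
  (x : nat -> X) (v : nat -> nat -> X -> R) (ws : nat -> nat -> Y -> R)
  (s t : nat -> nat -> R) (n : nat) :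
  uniformly_convex X -> smooth X ->
  bounded_linear A -> (exists x', A x' = y) ->
  1 < p -> 1 < r -> (0 < N)%N ->
  (forall z : X, is_duality p z (J z)) ->
  (forall f : X -> R, is_functional f -> is_dual_duality (pconj p) f (Jps f)) ->
  (forall w : Y, is_duality r w (Jr w)) ->
  in_closure_range_adj A (J (x 0%N)) ->
  (forall m : nat, (m <= n)%N -> algo_step A y p N J Jps Jr x v ws s t m) ->
  let beta := fun m k => ws m k y in
  let H := fun z : X => forall k : nat, (k < Nn N n)%N -> v n k z = beta n k in
  (* (a) *)
  (forall z : X, A z = y -> H z) /\
  (* (b) *)
  ((exists c : nat -> nat -> R,
      (fun z => J (x n) z - J (x 0%N) z) =
      (fun z => \sum_(m < n) lincomb (Nn N m) (c m) (v m) z)) /\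
   in_closure_range_adj A (fun z => J (x n) z - J (x 0%N) z)) /\
  (* (c) *)
  (H (x n.+1) /\ (forall z : X, H z -> Dp p J (x n) (x n.+1) <= Dp p J (x n) z)) /\
  (forall z : X, A z = y ->
     (exists c : nat -> R,
        J (x n.+1) = (fun z' => J (x n) z' + lincomb (Nn N n) c (v n) z')) /\
     (forall c : nat -> R,
        Dps p Jps (J z) (J (x n.+1)) <=
        Dps p Jps (J z) (fun z' => J (x n) z' + lincomb (Nn N n) c (v n) z'))) /\
  (* (d) *)
  (let a := Jps (v n (Nn N n).-1) in
   let b := Jps (fun z => Jr (A (x n) - y) (A z)) in
   let Vperp := fun z : X => forall k : nat, (k < Nprev N n)%N -> v n.-1 k z = 0 in
   Vperp a /\ (forall z : X, Vperp z -> Dp p J b a <= Dp p J b z)).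
Proof.
move=> hUC hS hA _ hp _ hN hJ hJps hJr _ halgo.
exact: (main_sec hUC hS hA hp hN hJ hJps hJr halgo).
Qed.
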